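(* Let $(X,Y,\phi)$ be an $L$-context and $X'\subseteq X$, $Y'\subseteq Y$. Then $(X',Y',\phi_{X',Y'})$ is a reduct of $(X,Y,\phi)$ in RST if and only if both $X\setminus X'$ and $Y\setminus Y'$ are $\phi$-reducible in RST.
   Context: $L=(L,* )$ is a complete residuated lattice: a complete lattice with bottom $0$ and top $1$, equipped with a commutative associative operation $*$ with unit $1$ satisfying $a*\bigvee_i b_i=\bigvee_i a*b_i$; $\to$ is its residuum ($a*b\le c\iff a\le b\to c$). An $L$-context is a triple $(X,Y,\phi)$ with $X,Y$ sets and $\phi\colon X\times Y\to L$. $L^X$ is the set of maps $X\to L$ with $L$-order $L^X(\mu,\mu')=\bigwedge_{x}(\mu(x)\to\mu'(x))$. $(\phi^\exists\mu)(y)=\bigvee_{x\in X}\mu(x)*\phi(x,y)$, $(\phi^\forall\lambda)(x)=\bigwedge_{y\in Y}(\phi(x,y)\to\lambda(y))$. $\mathcal{K}\phi=\{\mu\in L^X\mid\phi^\forall\phi^\exists\mu=\mu\}$ with the inherited $L$-order. $\phi_{X',Y'}$ is the restriction of $\phi$ to $X'\times Y'$; $\mu_{X'}$ the restriction of $\mu$ to $X'$; $\underline{\mu'}\in L^X$ the extension of $\mu'\in L^{X'}$ by $0$. An isomorphism of complete $L$-lattices is an $L$-isometric bijection. Reduct in RST: $(X',Y',\phi_{X',Y'})$ is a reduct of $(X,Y,\phi)$ in RST if the map $S_1\colon\mathcal{K}\phi\to\mathcal{K}\phi_{X',Y'}$, $S_1\mu=(\phi_{X',Y'})^\forall(\phi_{X',Y'})^\exists\mu_{X'}$,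 is an isomorphism of complete $L$-lattices; equivalently (by a theorem of the paper) any one of $S_2\mu=((\phi_{X,Y'})^\forall(\phi_{X,Y'})^\exists\mu)_{X'}$, $F_1\mu'=\phi^\forall\phi^\exists\underline{\mu'}$, $F_2\mu'=(\phi_{X,Y'})^\forall(\phi_{X,Y'})^\exists\underline{\mu'}$ (between $\mathcal{K}\phi$ and $\mathcal{K}\phi_{X',Y'}$) is an isomorphism. $\phi$-reducibility in RST: $X\setminus X'$ is $\phi$-reducible in RST if for every $\mu\in L^X$ there is $\mu'\in L^{X'}$ with $\phi^\exists\mu=(\phi_{X',Y})^\exists\mu'$; $Y\setminus Y'$ is $\phi$-reducible in RST if for every $\lambda\in L^Y$ there is $\lambda'\in L^{Y'}$ with $\phi^\forall\lambda=(\phi_{X,Y'})^\forall\lambda'$. *)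

(* Defs.v *)
Set Implicit Arguments.

Record crl := CRL {
  carrier :> Type;
  le : carrier -> carrier -> Prop;
  le_refl : forall a, le a a;
  le_trans : forall a b c, le a b -> le b c -> le a c;
  le_antisym : forall a b, le a b -> le b a -> a = b;
  sup : (carrier -> Prop) -> carrier;
  sup_ub : forall (S : carrier -> Prop) a, S a -> le a (sup S);
  sup_least : forall (S : carrier -> Prop) b,
      (forall a, S a -> le a b) -> le (sup S) b;
  inf : (carrier -> Prop) -> carrier;
  inf_lb : forall (S : carrier -> Prop) a, S a -> le (inf S) a;
  inf_greatest : forall (S : carrier -> Prop) b,
      (forall a, S a -> le b a) -> le b (inf S);
  mul : carrier -> carrier -> carrier;
  imp : carrier -> carrier -> carrier;
  mul_comm : forall a b, mul a b = mul b a;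
  mul_assoc : forall a b c, mul a (mul b c) = mul (mul a b) c;
  (* unit of * is the top element 1 = inf of the empty set *)
  mul_one : forall a, mul a (inf (fun _ => False)) = a;
  mul_sup : forall a (S : carrier -> Prop),
      mul a (sup S) = sup (fun c => exists b, S b /\ c = mul a b);
  residuation : forall a b c, le (mul a b) c <-> le a (imp b c)
}.

Arguments le {c} _ _ : rename.
Arguments sup {c} _ : rename.
Arguments inf {c} _ : rename.
Arguments mul {c} _ _ : rename.
Arguments imp {c} _ _ : rename.

Section Defs.
Context {L : crl}.

Definition supI {I : Type} (f : I -> L) : L := sup (fun a => exists i, a = f i).
Definition infI {I : Type} (f : I -> L) : L := inf (fun a => exists i, a = f i).

Definition phiE {X Y : Type} (phi : X -> Y -> L) (mu : X -> L) : Y -> L :=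
  fun y => supI (fun x => mul (mu x) (phi x y)).
Definition phiA {X Y : Type} (phi : X -> Y -> L) (lam : Y -> L) : X -> L :=
  fun x => infI (fun y => imp (phi x y) (lam y)).

Definition Lord {X : Type} (mu mu' : X -> L) : L :=
  infI (fun x => imp (mu x) (mu' x)).

Definition inK {X Y : Type} (phi : X -> Y -> L) (mu : X -> L) : Prop :=
  phiA phi (phiE phi mu) = mu.

(** Restrictions: X' and Y' are subsets given as predicates; the subsets
    themselves are the sigma types {x | X' x}. *)
Definition restr {X Y : Type} (phi : X -> Y -> L) (X' : X -> Prop) (Y' : Y -> Prop)
  : {x | X' x} -> {y | Y' y} -> L :=
  fun x y => phi (proj1_sig x) (proj1_sig y).
Definition restrX {X Y : Type} (phi : X -> Y -> L) (X' : X -> Prop)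
  : {x | X' x} -> Y -> L := fun x y => phi (proj1_sig x) y.
Definition restrY {X Y : Type} (phi : X -> Y -> L) (Y' : Y -> Prop)
  : X -> {y | Y' y} -> L := fun x y => phi x (proj1_sig y).
Definition restrf {X : Type} (mu : X -> L) (X' : X -> Prop) : {x | X' x} -> L :=
  fun x => mu (proj1_sig x).

(** Isomorphism of complete L-lattices: an L-isometric bijection
    f : P -> Q (P, Q subsets of L^A, L^B with the inherited L-order). *)
Definition L_iso {A B : Type} (P : (A -> L) -> Prop) (Q : (B -> L) -> Prop)
  (f : (A -> L) -> (B -> L)) : Prop :=
  (forall mu, P mu -> Q (f mu)) /\
  (forall mu1 mu2, P mu1 -> P mu2 -> f mu1 = f mu2 -> mu1 = mu2) /\
  (forall nu, Q nu -> exists mu, P mu /\ f mu = nu) /\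
  (forall mu1 mu2, P mu1 -> P mu2 -> Lord (f mu1) (f mu2) = Lord mu1 mu2).

Definition S1 {X Y : Type} (phi : X -> Y -> L) (X' : X -> Prop) (Y' : Y -> Prop)
  (mu : X -> L) : {x | X' x} -> L :=
  phiA (restr phi X' Y') (phiE (restr phi X' Y') (restrf mu X')).

Definition is_reduct {X Y : Type} (phi : X -> Y -> L) (X' : X -> Prop) (Y' : Y -> Prop)
  : Prop :=
  L_iso (inK phi) (inK (restr phi X' Y')) (S1 phi X' Y').

Definition reducibleX {X Y : Type} (phi : X -> Y -> L) (X' : X -> Prop) : Prop :=
  forall mu : X -> L, exists mu' : {x | X' x} -> L,
    phiE phi mu = phiE (restrX phi X') mu'.
Definition reducibleY {X Y : Type} (phi : X -> Y -> L) (Y' : Y -> Prop) : Prop :=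
  forall lam : Y -> L, exists lam' : {y | Y' y} -> L,
    phiA phi lam = phiA (restrY phi Y') lam'.

End Defs.

(* Main.v *)
Require Import Defs.
From Stdlib Require Import FunctionalExtensionality.

Definition one {L : crl} : L := @inf L (fun _ => False).
Definition fle {L : crl} {A : Type} (f g : A -> L) : Prop := forall x, le (f x) (g x).

Lemma le_top {L : crl} (a : L) : le a one.
Proof. apply inf_greatest. intros _ []. Qed.

Lemma one_mul {L : crl} (a : L) : mul one a = a.
Proof. rewrite mul_comm. apply mul_one. Qed.

Lemma mul_mono_r {L : crl} (a b c : L) : le a b -> le (mul c a) (mul c b).
Proof.
  intros H. rewrite (mul_comm _ c a). apply residuation.
  apply le_trans with b; [exact H|]. apply residuation. rewrite mul_comm. apply le_refl.
Qed.

Lemma mul_mono_l {L : crl} (a b c : L) : le a b -> le (mul a c) (mul b c).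
Proof. intros H. rewrite (mul_comm _ a), (mul_comm _ b). now apply mul_mono_r. Qed.

Lemma eval_imp {L : crl} (a b : L) : le (mul (imp a b) a) b.
Proof. apply residuation. apply le_refl. Qed.

Lemma supI_ub {L : crl} {I : Type} (f : I -> L) i : le (f i) (supI f).
Proof. apply sup_ub. exists i. reflexivity. Qed.

Lemma supI_least {L : crl} {I : Type} (f : I -> L) b :
  (forall i, le (f i) b) -> le (supI f) b.
Proof. intros H. apply sup_least. intros a [i ->]. apply H. Qed.

Lemma infI_lb {L : crl} {I : Type} (f : I -> L) i : le (infI f) (f i).
Proof. apply inf_lb. exists i. reflexivity. Qed.

Lemma infI_greatest {L : crl} {I : Type} (f : I -> L) b :
  (forall i, le b (f i)) -> le b (infI f).
Proof. intros H. apply inf_greatest. intros a [i ->]. apply H. Qed.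

Lemma mul_supI {L : crl} {I : Type} (c : L) (f : I -> L) b :
  (forall i, le (mul c (f i)) b) -> le (mul c (supI f)) b.
Proof.
  intros H. unfold supI. rewrite mul_sup. apply sup_least.
  intros a [x [[i ->] ->]]. apply H.
Qed.

Lemma fle_antisym {L : crl} {A : Type} (f g : A -> L) : fle f g -> fle g f -> f = g.
Proof. intros H1 H2. apply functional_extensionality. intros x. apply le_antisym; auto. Qed.

Lemma phiE_mono {L : crl} {A B : Type} (phi : A -> B -> L) m1 m2 :
  fle m1 m2 -> fle (phiE phi m1) (phiE phi m2).
Proof.
  intros H y. apply supI_least. intros x. apply le_trans with (mul (m2 x) (phi x y)).
  - apply mul_mono_l, H.
  - apply (supI_ub (fun x => mul (m2 x) (phi x y))).
Qed.

Lemma phiA_mono {L : crl} {A B : Type} (phi : A -> B -> L) l1 l2 :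
  fle l1 l2 -> fle (phiA phi l1) (phiA phi l2).
Proof.
  intros H x. apply infI_greatest. intros y. apply residuation.
  apply le_trans with (l1 y); [|apply H].
  apply residuation. apply (infI_lb (fun y => imp (phi x y) (l1 y))).
Qed.

Lemma unitG {L : crl} {A B : Type} (phi : A -> B -> L) m :
  fle m (phiA phi (phiE phi m)).
Proof.
  intros x. apply infI_greatest. intros y. apply residuation.
  apply (supI_ub (fun x => mul (m x) (phi x y))).
Qed.

Lemma counitG {L : crl} {A B : Type} (phi : A -> B -> L) l :
  fle (phiE phi (phiA phi l)) l.
Proof.
  intros y. apply supI_least. intros x. apply residuation.
  apply (infI_lb (fun y => imp (phi x y) (l y))).
Qed.

Lemma G {L : crl} {A B B' : Type} (phi : A -> B -> L) (g : B' -> B) (l : B' -> L) :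
  inK phi (fun a => infI (fun b' => imp (phi a (g b')) (l b'))).
Proof.
  set (mu := fun a => infI (fun b' => imp (phi a (g b')) (l b'))).
  unfold inK. apply fle_antisym; [|apply unitG].
  intros a. apply infI_greatest. intros b'. apply residuation.
  apply le_trans with (phiE phi mu (g b')).
  - apply residuation. apply (infI_lb (fun b => imp (phi a b) (phiE phi mu b))).
  - apply supI_least. intros x. apply residuation.
    apply (infI_lb (fun b' => imp (phi x (g b')) (l b'))).
Qed.

Lemma G_phiA {L : crl} {A B : Type} (phi : A -> B -> L) l : inK phi (phiA phi l).
Proof. exact (G phi (fun b => b) l). Qed.

Lemma Lord_top {L : crl} {A : Type} (m1 m2 : A -> L) :
  fle m1 m2 <-> le one (Lord m1 m2).
Proof.
  split.
  - intros H. apply infI_greatest. intros x. apply residuation. rewrite one_mul. apply H.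
  - intros H x. rewrite <- (one_mul (m1 x)). apply residuation.
    apply le_trans with (1 := H). apply (infI_lb (fun x => imp (m1 x) (m2 x))).
Qed.

Lemma Lord_refl {L : crl} {A : Type} (m : A -> L) : le one (Lord m m).
Proof. apply Lord_top. intro; apply le_refl. Qed.

Theorem mainTheorem6 (L : crl) (X Y : Type) (phi : X -> Y -> L)
  (X' : X -> Prop) (Y' : Y -> Prop) :
  is_reduct phi X' Y' <-> (reducibleX phi X' /\ reducibleY phi Y').
Proof.
  set (psi := restr phi X' Y').
  assert (GY : forall l, inK phi (phiA (restrY phi Y') l)).
  { intros l. exact (G phi (@proj1_sig Y Y') l). }
  split.
  - intros [Hmap [Hinj [Hsurj Hiso]]].
    assert (Rep : forall mu, inK phi mu ->
              mu = phiA (restrY phi Y') (phiE psi (S1 phi X' Y' mu))).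
    { intros mu Hmu. set (nu := S1 phi X' Y' mu).
      assert (Hnu : inK psi nu) by (apply Hmap; exact Hmu).
      apply Hinj; [exact Hmu | apply GY |].
      unfold S1 at 2. fold psi.
      change (restrf (phiA (restrY phi Y') (phiE psi nu)) X') with (phiA psi (phiE psi nu)).
      unfold inK in Hnu. rewrite Hnu. symmetry. exact Hnu. }
    split.
    + intros mu.
      set (m := phiA phi (phiE phi mu)).
      assert (Hm : inK phi m) by apply G_phiA.
      exists (restrf m X').
      set (rho := phiE (restrX phi X') (restrf m X')).
      assert (Hrho : fle rho (phiE phi m)).
      { intros y. apply supI_least. intros x'.
        apply (supI_ub (fun x => mul (m x) (phi x y))). }
      assert (Hm2 : m = phiA phi rho).
      { apply fle_antisym.
        - apply Lord_top. rewrite <- Hiso; [| exact Hm | apply G_phiA].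
          apply Lord_top.
          unfold S1. apply phiA_mono, phiE_mono.
          intros x'. unfold restrf.
          apply infI_greatest. intros y. apply residuation.
          apply (supI_ub (fun x' : {x | X' x} => mul (m (proj1_sig x')) (phi (proj1_sig x') y))).
        - intros x. apply le_trans with (phiA phi (phiE phi m) x);
            [apply phiA_mono, Hrho | rewrite Hm; apply le_refl]. }
      apply fle_antisym.
      * intros y. apply le_trans with (phiE phi m y).
        -- apply phiE_mono, unitG.
        -- rewrite Hm2. apply counitG.
      * intros y. apply le_trans with (1 := Hrho y). apply counitG.
    + intros lam. exists (phiE psi (S1 phi X' Y' (phiA phi lam))).
      apply Rep. apply G_phiA.
  - intros [RX RY].
    assert (F0 : forall mu, inK phi mu -> inK psi (restrf mu X')).
    { intros mu Hmu. destruct (RY (phiE phi mu)) as [l' Hl].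
      assert (E : restrf mu X' = phiA psi l').
      { rewrite <- Hmu, Hl. reflexivity. }
      rewrite E. apply G_phiA. }
    assert (F1 : forall mu, inK phi mu -> S1 phi X' Y' mu = restrf mu X').
    { intros mu Hmu. apply (F0 mu Hmu). }
    assert (Iso : forall m1 m2, inK phi m1 -> inK phi m2 ->
               Lord (S1 phi X' Y' m1) (S1 phi X' Y' m2) = Lord m1 m2).
    { intros m1 m2 Hm1 Hm2. rewrite (F1 m1 Hm1), (F1 m2 Hm2).
      set (e := Lord (restrf m1 X') (restrf m2 X')).
      apply le_antisym.
      - apply infI_greatest. intros x. apply (proj1 (residuation _ _ _ _)).
        apply le_trans with (phiA phi (phiE phi m2) x);
          [| rewrite Hm2; apply le_refl].
        apply infI_greatest. intros y. apply (proj1 (residuation _ _ _ _)).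
        rewrite <- mul_assoc.
        destruct (RX m1) as [nu Hnu].
        apply le_trans with (mul e (phiE (restrX phi X') nu y)).
        + apply mul_mono_r. rewrite <- Hnu.
          apply (supI_ub (fun x => mul (m1 x) (phi x y))).
        + apply mul_supI. intros x'. rewrite mul_assoc.
          apply le_trans with (mul (m2 (proj1_sig x')) (phi (proj1_sig x') y)).
          * apply mul_mono_l. apply le_trans with (mul e (m1 (proj1_sig x'))).
            -- apply mul_mono_r.
               apply le_trans with (phiA phi (phiE phi m1) (proj1_sig x'));
                 [| rewrite Hm1; apply le_refl].
               apply infI_greatest. intros y0. apply residuation.
               rewrite Hnu.
               apply (supI_ub (fun x' => mul (nu x') (restrX phi X' x' y0))).
            -- apply (proj2 (residuation _ _ _ _)).
               apply (infI_lb (fun x => imp (restrf m1 X' x) (restrf m2 X' x))).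
          * apply (supI_ub (fun x => mul (m2 x) (phi x y))).
      - apply infI_greatest. intros x'.
        apply (infI_lb (fun x => imp (m1 x) (m2 x)) (proj1_sig x')). }
    split; [| split; [| split]].
    + intros mu Hmu. rewrite (F1 mu Hmu). apply F0, Hmu.
    + intros m1 m2 Hm1 Hm2 E. apply fle_antisym.
      * apply Lord_top. rewrite <- (Iso m1 m2 Hm1 Hm2), E. apply Lord_refl.
      * apply Lord_top. rewrite <- (Iso m2 m1 Hm2 Hm1), E. apply Lord_refl.
    + intros nu Hnu. exists (phiA (restrY phi Y') (phiE psi nu)).
      split; [apply GY|].
      rewrite F1 by apply GY. exact Hnu.
    + exact Iso.
Qed.
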